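(* Let $S=\{1,\ldots,n\}$, let $\boldsymbol{P}(S)$ be the set of partitions of $S$, and let $\varrho(\mathcal{C})\ge0$ for $\mathcal{C}\in\boldsymbol{P}(S)$. Let $(\Sigma_t)_{t\ge0}$ be the partitioning process, i.e. the continuous-time Markov chain on $\boldsymbol{P}(S)$ with rate matrix $Q$ given as follows: for $\mathcal{B}\ne\mathcal{A}$, $Q(\mathcal{A},\mathcal{B})=\varrho^{A}_{\mathcal{B}_A}$ if $\mathcal{B}=(\mathcal{A}\setminus\{A\})\cup\mathcal{B}_A$ for some block $A\in\mathcal{A}$ and some partition $\mathcal{B}_A\ne\{A\}$ of $A$, and $Q(\mathcal{A},\mathcal{B})=0$ otherwise; and $Q(\mathcal{A},\mathcal{A})=-\sum_{\mathcal{C}\ne\mathcal{A}}Q(\mathcal{A},\mathcal{C})$. Here $\varrho^{A}_{\mathcal{B}_A}=\sum_{\mathcal{C}\in\boldsymbol{P}(S):\,\mathcal{C}|_A=\mathcal{B}_A}\varrho(\mathcal{C})$. Define $N:\mathbb{R}^{\boldsymbol{P}(S)}\to\mathbb{R}$ by $N(p)=\sum_{\mathcal{A}\in\boldsymbol{P}(S)}p(\mathcal{A})|\mathcal{A}|$. Then the law $p_t$ of $\Sigma_t$, which satisfies $\dot p_t=\sum_{\mathcal{A},\mathcal{B}}p_t(\mathcal{A})Q(\mathcal{A},\mathcal{B})(\mathcal{B}-\mathcal{A})$, satisfies a generalised gradient system with respect to $N$: $\dot p_t=K(p_t)\nabla N(p_t)$, where $K$ takes values in the symmetric positive semi-definite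 matrices, is continuous on the set of probability vectors on $\boldsymbol{P}(S)$ and smooth on its interior.
   Context: $|\mathcal{A}|$ is the number of blocks of $\mathcal{A}$. For a partition $\mathcal{C}$ of $S$ and $U\subseteq S$, $\mathcal{C}|_U=\{C\cap U: C\in\mathcal{C}\}\setminus\{\varnothing\}$ is the induced partition of $U$. Vectors in $\mathbb{R}^{\boldsymbol{P}(S)}$ are formal sums $\sum p(\mathcal{A})\mathcal{A}$ with each partition identified with a standard basis vector; $\nabla$ is the Euclidean gradient. *)

(* Defs.v *)
From HB Require Import structures.
From mathcomp Require Import all_boot all_order all_algebra.
From mathcomp Require Import all_classical all_reals all_analysis.
Set Implicit Arguments. Unset Strict Implicit. Unset Printing Implicit Defensive.
Import Order.TTheory GRing.Theory Num.Theory.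
Import numFieldNormedType.Exports.
Local Open Scope ring_scope.

(* S = {1,..,n} is modelled by 'I_n.  A partition of S is a set of nonempty,
   pairwise disjoint blocks covering S (finset's [partition]). *)
Definition part (n : nat) := {P : {set {set 'I_n}} | finset.partition P [set: 'I_n]}.

Definition restr n (C : {set {set 'I_n}}) (U : {set 'I_n}) : {set {set 'I_n}} :=
  [set B :&: U | B in C] :\ finset.set0.

Definition rho_ind (R : realType) n (rho : part n -> R)
    (A : {set 'I_n}) (BA : {set {set 'I_n}}) : R :=
  \sum_(C : part n | restr (val C) A == BA) rho C.

(* off-diagonal rate: rho^{A0}_{B_A} when B = (A \ {A0}) u B_A for a block A0
   of A and a partition B_A <> {A0} of A0; 0 if no such (A0, B_A) exists.
   (Such a pair is unique when it exists, so the sum has at most one term.) *)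
Definition rate_off (R : realType) n (rho : part n -> R) (A B : part n) : R :=
  \sum_(A0 in val A)
    \sum_(BA : {set {set 'I_n}} |
          [&& finset.partition BA A0, BA != [set A0] & val B == (val A :\ A0) :|: BA])
      rho_ind rho A0 BA.

Definition rate (R : realType) n (rho : part n -> R) (A B : part n) : R :=
  if A == B then - \sum_(C : part n | C != A) rate_off rho A C
  else rate_off rho A B.

(* R^{P(S)} is represented as row vectors indexed by 'I_#|part n| via enum_rank *)
Definition np n := #|{: part n}|.

Definition ev (R : realType) n (A : part n) : 'rV[R]_(np n) :=
  delta_mx 0 (enum_rank A).

Definition pv (R : realType) n (p : 'rV[R]_(np n)) (A : part n) : R :=
  p 0 (enum_rank A).

Definition fwd (R : realType) n (rho : part n -> R) (p : 'rV[R]_(np n))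
    : 'rV[R]_(np n) :=
  \sum_(A : part n) \sum_(B : part n) (pv p A * rate rho A B) *: (ev R B - ev R A).

Definition Nfun (R : realType) n (p : 'rV[R]_(np n)) : R :=
  \sum_(A : part n) pv p A * #|val A|%:R.

Definition gradient (R : realType) m (f : 'rV[R]_m -> R) (p : 'rV[R]_m)
    : 'rV[R]_m :=
  \row_i ('D_(delta_mx 0 i) f p).

Definition prob_vectors (R : realType) m : set 'rV[R]_m :=
  fun p => (forall i, 0 <= p 0 i) /\ \sum_i p 0 i = 1.

Definition pos_orthant (R : realType) m : set 'rV[R]_m :=
  fun p => forall i, 0 < p 0 i.

Fixpoint iterD (R : realType) (V W : normedModType R) (vs : seq V) (f : V -> W)
    : V -> W :=
  match vs with
  | [::] => f
  | v :: vs' => fun x => 'D_v (iterD vs' f) x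
  end.

Definition smooth_on (R : realType) (V W : normedModType R) (U : set V)
    (f : V -> W) : Prop :=
  forall vs : seq V,
    (forall v x, U x -> derivable (iterD vs f) x v) /\
    (forall x, U x -> {for x, continuous (iterD vs f)}).

Definition symmetric_mx (R : realType) m (M : 'M[R]_m) : Prop := M^T = M.

Definition psd_mx (R : realType) m (M : 'M[R]_m) : Prop :=
  forall v : 'cV[R]_m, 0 <= (v^T *m M *m v) 0 0.

(* Main.v *)
Require Import Defs.
From HB Require Import structures.
From mathcomp Require Import all_boot all_order all_algebra.
From mathcomp Require Import all_classical all_reals all_analysis.
Import Order.TTheory GRing.Theory Num.Theory.
Import numFieldNormedType.Exports.
Local Open Scope ring_scope.
Local Open Scope classical_set_scope.

Section Gen.
Variable R : realType.

Lemma derive_lin (V W : normedModType R) (f : V -> W) a v c :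
  (forall h, f (h *: v + a) - f a = h *: c) -> is_derive a v f c.
Proof.
move=> H.
have E : \forall h \near 0^', h^-1 *: ((f \o shift a) (h *: v) - f a) = c.
  near=> h; rewrite /= H scalerA mulVf ?scale1r //.
  near: h; exact: nbhs_dnbhs_neq.
split; first exact: (is_cvg_near_cst c).
exact: lim_near_cst.
Unshelve. all: by end_near. Qed.

Variables (T : finType) (m : nat) (rk : T -> 'I_m) (W : normedModType R).

Definition Lc (M : T -> W) (p : 'rV[R]_m) : W := \sum_(A : T) p 0 (rk A) *: M A.

Lemma Lc_lin M h v a : Lc M (h *: v + a) - Lc M a = h *: Lc M v.
Proof.
rewrite /Lc scaler_sumr -sumrB; apply: eq_bigr => A _.
by rewrite !mxE scalerDl addrK scalerA.
Qed.

Lemma Lc_derive M a v : is_derive a v (Lc M) (Lc M v).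
Proof. apply: derive_lin => h; exact: Lc_lin. Qed.

Lemma Lc_cont M : continuous (Lc M).
Proof.
move=> x; rewrite /Lc.
elim: (index_enum T) => [|a r IH].
  have -> : (fun p : 'rV[R]_m => \sum_(A <- [::]) p 0 (rk A) *: M A) = cst 0.
    by apply/funext => p; rewrite big_nil.
  exact: cst_continuous.
have -> : (fun p : 'rV[R]_m => \sum_(A <- a :: r) p 0 (rk A) *: M A) =
   (fun p => p 0 (rk a) *: M a) + (fun p => \sum_(A <- r) p 0 (rk A) *: M A).
  by apply/funext => p; rewrite big_cons.
apply: (@continuousD R W 'rV[R]_m); last exact: IH.
apply: (@continuousZr_tmp R W 'rV[R]_m); exact: coord_continuous.
Qed.

Lemma Lc_iterD M (vs : seq 'rV[R]_m) : Defs.iterD vs (Lc M) = Lc M \/ exists c, Defs.iterD vs (Lc M) = cst c.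
Proof.
elim: vs => [|v vs [IH|[c IH]]] /=; first by left.
  right; exists (Lc M v); apply/funext => x; rewrite IH.
  by have [_ ->] := Lc_derive M x v.
right; exists 0; apply/funext => x; rewrite IH; exact: derive_cst.
Qed.

Lemma Lc_smooth M (U : set 'rV[R]_m) : smooth_on U (Lc M).
Proof.
move=> vs; case: (Lc_iterD M vs) => [E|[c E]]; rewrite E; split.
- by move=> v x _; have [] := Lc_derive M x v.
- by move=> x _; exact: Lc_cont.
- by move=> v x _; exact: derivable_cst.
- by move=> x _; exact: cst_continuous.
Qed.

End Gen.
Local Close Scope classical_set_scope.
From mathcomp Require Import zify.
Lemma card_split n (A B : part n) (A0 : {set 'I_n}) (BA : {set {set 'I_n}}) :
  A0 \in val A -> finset.partition BA A0 -> BA != [set A0] ->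
  val B = (val A :\ A0) :|: BA -> (#|val A| < #|val B|)%N.
Proof.
move=> A0A /and3P[/eqP covBA trivBA nz0BA] neBA ->.
have /and3P[/eqP covA trivA nz0A] := valP A.
have A0n0 : A0 != finset.set0 by apply: contraNneq nz0A => <-.
have I0 : (val A :\ A0) :&: BA = finset.set0.
  apply/setP => X; rewrite !inE; apply/negbTE/negP => /andP[/andP[XA0 XA] XBA].
  have XsubA0 : X \subset A0 by rewrite -covBA; exact: finset.bigcup_sup.
  have Xn0 : X != finset.set0 by apply: contraNneq nz0BA => <-.
  have [x xX] := set0Pn _ Xn0.
  have dj := finset.trivIsetP trivA X A0 XA A0A XA0.
  by move/fintype.subsetP: XsubA0 => /(_ x xX); rewrite (disjointFr dj xX).
have c2 : (1 < #|BA|)%N.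
  rewrite ltnNge; apply/negP; rewrite leq_eqVlt ltnS leqn0 => /orP[/cards1P[X EX]|].
    by move: covBA neBA; rewrite EX cover1 => ->; rewrite eqxx.
  rewrite cards_eq0 => /eqP E0; move: covBA; rewrite E0 /finset.cover big_set0 => E.
  by rewrite -E eqxx in A0n0.
have := cardsUI (val A :\ A0) BA; rewrite I0 cards0 addn0 => ->.
rewrite (cardsD1 A0 (val A)) A0A.
move: c2; set a := #|_ :\ _|; set b := #|BA|; move=> c2. lia.
Qed.

Section Main.
Variables (R : realType) (n : nat) (rho : part n -> R).
Hypothesis rho_ge0 : forall C : part n, 0 <= rho C.

Lemma rate_off_ge0 A B : 0 <= rate_off rho A B.
Proof.
apply: sumr_ge0 => A0 _; apply: sumr_ge0 => BA _; apply: sumr_ge0 => C _.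
exact: rho_ge0.
Qed.

Lemma rate_off_lt A B : rate_off rho A B != 0 -> (#|val A| < #|val B|)%N.
Proof.
apply: contraR => Hlt; apply/eqP; apply: big1 => A0 A0A; apply: big1 => BA.
move=> /and3P[pBA ne /eqP eB]; exfalso; move/negP: Hlt; apply.
exact: (@card_split _ A B A0 BA A0A pBA ne eB).
Qed.

Definition wt (A B : part n) : R :=
  rate_off rho A B / (#|val B|%:R - #|val A|%:R).

Lemma wt_ge0 A B : 0 <= wt A B.
Proof.
rewrite /wt; have [E|NE] := eqVneq (rate_off rho A B) 0; first by rewrite E mul0r.
apply: divr_ge0; first exact: rate_off_ge0.
by rewrite subr_ge0 ler_nat ltnW // rate_off_lt.
Qed.

Lemma wt_mul A B : wt A B * (#|val B|%:R - #|val A|%:R) = rate_off rho A B.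
Proof.
rewrite /wt; have [E|NE] := eqVneq (rate_off rho A B) 0; first by rewrite E !mul0r.
rewrite divfK // subr_eq0 eq_sym; apply/negP => /eqP/(congr1 (fun x : R => x)) E.
have := @rate_off_lt A B NE; move: E => /eqP; rewrite eqr_nat => /eqP ->.
by rewrite ltnn.
Qed.

Definition dd (A B : part n) : 'rV[R]_(np n) := ev R B - ev R A.
Definition MK (A : part n) : 'M[R]_(np n) :=
  \sum_B wt A B *: ((dd A B)^T *m dd A B).
Definition Kf : 'rV[R]_(np n) -> 'M[R]_(np n) :=
  @Lc R (part n) (np n) (@enum_rank (part n)) _ MK.

Lemma Kf_sym p : (Kf p)^T = Kf p.
Proof.
rewrite /Kf /Lc linear_sum; apply: eq_bigr => A _; rewrite linearZ /=.
congr (_ *: _); rewrite /MK linear_sum; apply: eq_bigr => B _.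
by rewrite linearZ /= trmx_mul trmxK.
Qed.

Lemma Kf_psd p : prob_vectors p -> psd_mx (Kf p).
Proof.
move=> [p0 _] v; rewrite /Kf /Lc mulmx_sumr mulmx_suml summxE.
apply: sumr_ge0 => A _; rewrite -scalemxAr -scalemxAl mxE mulr_ge0 //.
rewrite /MK mulmx_sumr mulmx_suml summxE; apply: sumr_ge0 => B _.
rewrite -scalemxAr -scalemxAl mxE mulr_ge0 ?wt_ge0 //.
rewrite mulmxA -trmx_mul -mulmxA mxE big_ord1 !mxE -expr2; exact: sqr_ge0.
Qed.


Lemma Nfun_Lc : @Nfun R n = @Lc R (part n) (np n) (@enum_rank (part n)) _
                   (fun A => (#|val A|%:R : R^o)).
Proof. by apply/funext => p; rewrite /Nfun /Lc; apply: eq_bigr. Qed.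

Lemma grad_val p (B : part n) :
  gradient (@Nfun R n) p 0 (enum_rank B) = #|val B|%:R.
Proof.
rewrite mxE Nfun_Lc; have [_ ->] := @Lc_derive R (part n) (np n) (@enum_rank (part n)) _
   (fun A : part n => (#|val A|%:R : R^o)) p (delta_mx 0 (enum_rank B)).
rewrite /Lc (bigD1 B) //= mxE !eqxx /= scale1r big1 ?addr0 // => A nAB.
by rewrite mxE (inj_eq enum_rank_inj) (negbTE nAB) andbF scale0r.
Qed.

Lemma gdd p A B :
  gradient (@Nfun R n) p *m (dd A B)^T *m dd A B =
  (#|val B|%:R - #|val A|%:R) *: dd A B.
Proof.
rewrite [X in X *m _]mx11_scalar mul_scalar_mx; congr (_ *: _).
rewrite /dd /ev linearB /= !trmx_delta mulmxBr -!colE.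
by rewrite -(grad_val p A) -(grad_val p B) !mxE.
Qed.

Lemma main_eq p :
  fwd rho p = (Kf p *m (gradient (@Nfun R n) p)^T)^T.
Proof.
rewrite trmx_mul trmxK Kf_sym /Kf /Lc /fwd mulmx_sumr; apply: eq_bigr => A _.
rewrite -scalemxAr /MK mulmx_sumr scaler_sumr; apply: eq_bigr => B _.
rewrite -scalemxAr mulmxA gdd !scalerA.
have [<-|nAB] := eqVneq A B; first by rewrite /dd subrr !scaler0.
by rewrite /rate (negbTE nAB) -mulrA wt_mul.
Qed.

End Main.

Local Open Scope classical_set_scope.

Theorem corollary5p3 (R : realType) (n : nat) (rho : part n -> R)
    (rho_ge0 : forall C : part n, 0 <= rho C) :
  exists K : 'rV[R]_(np n) -> 'M[R]_(np n),
    (forall p, prob_vectors p -> symmetric_mx (K p) /\ psd_mx (K p)) /\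
    {within prob_vectors (R:=R) (m:=np n), continuous K} /\
    smooth_on (pos_orthant (R:=R) (m:=np n)) K /\
    (forall p, prob_vectors p ->
       fwd rho p = (K p *m (gradient (@Nfun R n) p)^T)^T).
Proof.
exists (@Kf R n rho); split.
  move=> p pp; split; first exact: Kf_sym.
  exact: Kf_psd.
split; first by apply: continuous_subspaceT; exact: Lc_cont.
split; first exact: Lc_smooth.
by move=> p _; exact: main_eq.
Qed.
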